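(* Let $p\ge 2$, $w\in\mathbb{R}$, $z\in\mathbb{R}^{p-1}$, $\lambda_2\ge 0$ and $\lambda_1>0$. Then the optimization problem \[ \min_{\beta^+\in\mathbb{R},\,\beta^-\in\mathbb{R},\,\theta\in\mathbb{R}^{p-1}}\ \frac12\bigl(w-(\beta^+-\beta^-)\bigr)^2+\frac12\|z-\theta\|_2^2+\lambda_1(\beta^++\beta^-)+\lambda_2\|\theta\|_1 \] subject to $\beta^+\ge 0$, $\beta^-\ge 0$, $\|\theta\|_1\le \beta^++\beta^-$, has a unique solution $(\hat\beta^+,\hat\beta^-,\hat\theta)$.
   Context: $\|\cdot\|_1$ and $\|\cdot\|_2$ denote the $\ell_1$ and Euclidean norms on $\mathbb{R}^{p-1}$. The tuning parameters $\lambda_1,\lambda_2$ are nonnegative. *)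

(* Defs.v *)
From mathcomp Require Import all_boot all_order all_algebra.
From mathcomp Require Import reals.
Set Implicit Arguments. Unset Strict Implicit. Unset Printing Implicit Defensive.
Import Order.TTheory GRing.Theory Num.Theory.
Local Open Scope ring_scope.

Definition l1norm (R : realType) (n : nat) (v : 'rV[R]_n) : R :=
  \sum_(i < n) `|v ord0 i|.

Definition l2norm (R : realType) (n : nat) (v : 'rV[R]_n) : R :=
  Num.sqrt (\sum_(i < n) (v ord0 i) ^+ 2).

Definition objective (R : realType) (n : nat) (lam1 lam2 w : R) (z : 'rV[R]_n)
  (bp bm : R) (th : 'rV[R]_n) : R :=
  2^-1 * (w - (bp - bm)) ^+ 2 + 2^-1 * (l2norm (z - th)) ^+ 2
  + lam1 * (bp + bm) + lam2 * l1norm th.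

Definition feasible (R : realType) (n : nat) (bp bm : R) (th : 'rV[R]_n) : Prop :=
  0 <= bp /\ 0 <= bm /\ l1norm th <= bp + bm.

(* Main.v *)
Require Import Defs.
From mathcomp Require Import all_boot all_order all_algebra.
From mathcomp Require Import all_classical all_reals all_analysis.
From mathcomp Require Import ring lra.
Import Order.TTheory GRing.Theory Num.Theory.
Import numFieldNormedType.Exports.
Local Open Scope classical_set_scope.
Local Open Scope ring_scope.

Section S.
Variable R : realType.
Variable T : topologicalType.

Lemma cont_sum (I : Type) (r : seq I) (F : I -> T -> R) :
  (forall i, continuous (F i)) -> continuous (fun x => \sum_(i <- r) F i x).
Proof.
move=> hF; elim: r => [|a r IH].
  have -> : (fun x => \sum_(i <- [::]) F i x) = fun=> 0 by apply/funext=> x; rewrite big_nil.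
  exact: cst_continuous.
have -> : (fun x => \sum_(i <- a :: r) F i x) = F a + (fun x => \sum_(i <- r) F i x).
  by apply/funext=> x; rewrite big_cons.
by move=> x; apply: continuousD; [exact: hF|exact: IH].
Qed.

Lemma cont_add (f g : T -> R) : continuous f -> continuous g -> continuous (fun x => f x + g x).
Proof. by move=> hf hg x; apply: continuousD; [exact: hf|exact: hg]. Qed.
Lemma cont_sub (f g : T -> R) : continuous f -> continuous g -> continuous (fun x => f x - g x).
Proof. by move=> hf hg x; apply: continuousB; [exact: hf|exact: hg]. Qed.

Lemma cont_mul (f g : T -> R) : continuous f -> continuous g -> continuous (fun x => f x * g x).
Proof. by move=> hf hg x; apply: cvgM; [exact: hf|exact: hg]. Qed.

End S.

Section S2.
Variable R : realType.
Variable n : nat.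
Let T := (R * R * 'rV[R]_n)%type.

Lemma c11 : continuous (fun x : T => x.1.1).
Proof.
move=> x; apply: (@continuous_comp _ _ _ (fun x : T => x.1) fst).
  exact: cvg_fst.
exact: cvg_fst.
Qed.
Lemma c12 : continuous (fun x : T => x.1.2).
Proof.
move=> x; apply: (@continuous_comp _ _ _ (fun x : T => x.1) snd).
  exact: cvg_fst.
exact: cvg_snd.
Qed.
Lemma c2i i : continuous (fun x : T => x.2 ord0 i).
Proof.
move=> x; apply: (@continuous_comp _ _ _ (fun x : T => x.2) (fun M : 'rV[R]_n => M ord0 i)).
  exact: cvg_snd.
exact: coord_continuous.
Qed.
Lemma cabs (f : T -> R) : continuous f -> continuous (fun x => `|f x|).
Proof.
move=> hf x; apply: (@continuous_comp _ _ _ f (Num.norm : R -> R)); first exact: hf.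
exact: norm_continuous.
Qed.
End S2.

Section Main.
Variables (R : realType) (n : nat) (lam1 lam2 w : R) (z : 'rV[R]_n).
Hypotheses (hl2 : 0 <= lam2) (hl1 : 0 < lam1).

Lemma objE bp bm th : objective lam1 lam2 w z bp bm th =
  2^-1 * (w - (bp - bm)) ^+ 2 + 2^-1 * (\sum_(i < n) (z ord0 i - th ord0 i) ^+ 2)
  + lam1 * (bp + bm) + lam2 * (\sum_(i < n) `|th ord0 i|).
Proof.
rewrite /objective /l2norm /l1norm sqr_sqrtr; last by apply: sumr_ge0 => i _; exact: sqr_ge0.
by congr (_ + _ + _ + _); congr (_ * _); apply: eq_bigr => i _; rewrite !mxE.
Qed.

Lemma l1_ge0 (th : 'rV[R]_n) : 0 <= l1norm th.
Proof. by apply: sumr_ge0 => i _. Qed.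

Lemma obj_lb bp bm th : feasible bp bm th ->
  lam1 * (bp + bm) <= objective lam1 lam2 w z bp bm th.
Proof.
move=> _; rewrite objE.
have h1 : 0 <= 2^-1 * (w - (bp - bm)) ^+ 2 by rewrite mulr_ge0 ?sqr_ge0.
have h2 : 0 <= 2^-1 * (\sum_(i < n) (z ord0 i - th ord0 i) ^+ 2).
  by rewrite mulr_ge0 //; apply: sumr_ge0 => i _; exact: sqr_ge0.
have h3 : 0 <= lam2 * (\sum_(i < n) `|th ord0 i|) by rewrite mulr_ge0 //; apply: sumr_ge0.
lra.
Qed.

Let T := (R * R * 'rV[R]_n)%type.
Let obj (x : T) := objective lam1 lam2 w z x.1.1 x.1.2 x.2.

Lemma obj_cont : continuous obj.
Proof.
have -> : obj = fun x : T => 2^-1 * (w - (x.1.1 - x.1.2)) ^+ 2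
   + 2^-1 * (\sum_(i <- index_enum 'I_n) (z ord0 i - x.2 ord0 i) ^+ 2)
   + lam1 * (x.1.1 + x.1.2) + lam2 * (\sum_(i <- index_enum 'I_n) `|x.2 ord0 i|).
  by apply/funext => x; rewrite /obj objE.
have cc (c : R) : continuous (fun _ : T => c) by move=> x; exact: cst_continuous.
have cD (f g : T -> R) : continuous f -> continuous g -> continuous (fun x => f x + g x).
  by move=> hf hg x; apply: continuousD; [exact: hf|exact: hg].
have cB (f g : T -> R) : continuous f -> continuous g -> continuous (fun x => f x - g x).
  by move=> hf hg x; apply: continuousB; [exact: hf|exact: hg].
have cM := @cont_mul R T.
have cX (f : T -> R) : continuous f -> continuous (fun x => f x ^+ 2).
  by move=> hf; apply: (cM f f).
apply: (cD); [apply: (cD); [apply: (cD)|]|].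
- apply: (cM) => //; apply: (cX); apply: (cB) => //; apply: (cB); [exact: c11|exact: c12].
- apply: (cM) => //; apply: cont_sum => i; apply: (cX); apply: (cB) => //; exact: c2i.
- apply: (cM) => //; apply: (cD); [exact: c11|exact: c12].
- apply: (cM) => //; apply: cont_sum => i; apply: cabs; exact: c2i.
Qed.

Lemma existence : exists s : T, feasible s.1.1 s.1.2 s.2 /\
  forall bp bm th, feasible bp bm th -> obj s <= objective lam1 lam2 w z bp bm th.
Proof.
pose C := obj (0, 0, 0).
have l10 : l1norm (0 : 'rV[R]_n) = 0 by rewrite /l1norm big1 // => i _; rewrite mxE normr0.
have f0 : feasible (0:R) 0 (0 : 'rV[R]_n) by rewrite /feasible l10 addr0 lexx.
have C0 : 0 <= C by have := (@obj_lb 0 0 0 f0); rewrite /C /obj /= addr0 mulr0.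
pose B := C / lam1.
have B0 : 0 <= B by rewrite divr_ge0 // ltW.
pose K := [set x : T | 0 <= x.1.1] `&` [set x : T | 0 <= x.1.2]
  `&` [set x : T | 0 <= x.1.1 + x.1.2 - l1norm x.2]
  `&` [set x : T | 0 <= B - (x.1.1 + x.1.2)].
have cl (f : T -> R) : continuous f -> closed [set x : T | 0 <= f x].
  move=> hf; apply: (@preimage_closed _ _ f [set y | 0 <= y]); last exact: closed_ge.
  by move=> x _; exact: hf.
have cl1 : continuous (fun x : T => l1norm x.2).
  rewrite /l1norm; apply: cont_sum => i; apply: cabs; exact: c2i.
have Kcl : closed K.
  apply: closedI; [apply: closedI; [apply: closedI|]|]; apply: (cl).
  - exact: c11.
  - exact: c12.
  - by apply: cont_sub; [apply: cont_add; [exact: c11|exact: c12]|exact: cl1].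
  - by apply: cont_sub; [move=> x; exact: cst_continuous|apply: cont_add; [exact: c11|exact: c12]].
have Kcp : compact K.
  have Bc : compact ((`[0, B] `*` `[0, B]) `*` [set v : 'rV[R]_n | forall i, `[- B, B]%classic (v ord0 i)]).
    have s1 : compact (`[0, B] : set R) by exact: segment_compact.
    have s2 : compact [set v : 'rV[R]_n | forall i, `[- B, B]%classic (v ord0 i)].
      apply: (@rV_compact _ n (fun=> `[- B, B]%classic)).
      by move=> _; exact: segment_compact.
    exact: (compact_setX (compact_setX s1 s1) s2).
  apply: (subclosed_compact Kcl Bc).
  move=> [[a b] v] [[[/= ha hb] hl] hB]; rewrite /= in_itv /= in_itv /=.
  have habs i : `|v ord0 i| <= l1norm v.
    rewrite /l1norm (bigD1 i) //= lerDl; by apply: sumr_ge0.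
  split; [split|] => /=; rewrite ?in_itv /=.
  - apply/andP; split => //; lra.
  - apply/andP; split => //; lra.
  - move=> i; rewrite in_itv /= -ler_norml; have := habs i; lra.
have K0 : K !=set0.
  exists (0, 0, 0); rewrite /K /= l10; split; [split; [split|]|] => /=; lra.
have [c cK cmin] := compact_EVT_min K0 Kcp (continuous_subspaceT obj_cont).
exists c; move: cK; rewrite in_setE => -[[[ha hb] hl] hB]; rewrite /= in ha hb hl hB.
split; first by rewrite /feasible; split => //; split => //; lra.
move=> bp bm th hf.
have [hs|hs] := lerP (bp + bm) B.
  apply: (cmin (bp, bm, th)); rewrite in_setE /K /=; case: hf => h1 [h2 h3].
  split; [split; [split|]|] => /=; lra.
have c0 : obj c <= C.
  apply: (cmin (0, 0, 0)); rewrite in_setE /K /= l10; split; [split; [split|]|] => /=; lra.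
have := @obj_lb bp bm th hf.
have : lam1 * B = C by rewrite /B mulrC divfK // gt_eqF.
have : lam1 * B < lam1 * (bp + bm) by rewrite ltr_pM2l.
lra.
Qed.

Lemma uniq_key a1 b1 (t1 : 'rV[R]_n) a2 b2 (t2 : 'rV[R]_n) :
  feasible a1 b1 t1 -> feasible a2 b2 t2 ->
  (forall bp bm th, feasible bp bm th -> objective lam1 lam2 w z a1 b1 t1 <= objective lam1 lam2 w z bp bm th) ->
  (forall bp bm th, feasible bp bm th -> objective lam1 lam2 w z a2 b2 t2 <= objective lam1 lam2 w z bp bm th) ->
  (a1, b1, t1) = (a2, b2, t2).
Proof.
move=> f1 f2 m1 m2.
pose am := 2^-1 * (a1 + a2); pose bm := 2^-1 * (b1 + b2).
pose tm : 'rV[R]_n := 2^-1 *: (t1 + t2).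
have tmE i : tm ord0 i = 2^-1 * (t1 ord0 i + t2 ord0 i) by rewrite !mxE.
have habs : \sum_(i < n) `|tm ord0 i| <= 2^-1 * (\sum_(i < n) `|t1 ord0 i| + \sum_(i < n) `|t2 ord0 i|).
  rewrite -big_split /= mulr_sumr; apply: ler_sum => i _.
  rewrite tmE normrM ger0_norm ?invr_ge0 // ler_wpM2l ?invr_ge0 //; exact: ler_normD.
have fm : feasible am bm tm.
  case: f1 => h1 [h2 h3]; case: f2 => h4 [h5 h6].
  move: habs; rewrite /feasible /am /bm -/(l1norm t1) -/(l1norm t2) -/(l1norm tm) => habs.
  split; first by rewrite mulr_ge0 ?invr_ge0 ?addr_ge0.
  split; first by rewrite mulr_ge0 ?invr_ge0 ?addr_ge0.
  lra.
have e12 := m1 _ _ _ f2; have e21 := m2 _ _ _ f1; have e1m := m1 _ _ _ fm.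
move: e12 e21 e1m; rewrite !objE.
set d1 := a1 - b1; set d2 := a2 - b2.
have hdm : am - bm = 2^-1 * (d1 + d2) by rewrite /am /bm /d1 /d2; field.
rewrite hdm.
have sq1 : (w - 2^-1 * (d1 + d2)) ^+ 2 = 2^-1 * ((w - d1) ^+ 2 + (w - d2) ^+ 2) - 4^-1 * (d1 - d2) ^+ 2.
  by field.
have sq2 : \sum_(i < n) (z ord0 i - tm ord0 i) ^+ 2 =
   2^-1 * (\sum_(i < n) (z ord0 i - t1 ord0 i) ^+ 2 + \sum_(i < n) (z ord0 i - t2 ord0 i) ^+ 2)
   - 4^-1 * \sum_(i < n) (t1 ord0 i - t2 ord0 i) ^+ 2.
  rewrite -big_split /= !mulr_sumr -sumrB; apply: eq_bigr => i _; by rewrite tmE; field.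
rewrite sq1 sq2 /am /bm.
have hl2' := ler_wpM2l hl2 habs.
set S1 := \sum_(i < n) (z ord0 i - t1 ord0 i) ^+ 2.
set S2 := \sum_(i < n) (z ord0 i - t2 ord0 i) ^+ 2.
set Q := \sum_(i < n) (t1 ord0 i - t2 ord0 i) ^+ 2.
move: hl2'.
set A1 := \sum_(i < n) `|t1 ord0 i|.
set A2 := \sum_(i < n) `|t2 ord0 i|.
set Am := \sum_(i < n) `|tm ord0 i|.
move=> hl2' e12 e21 e1m.
have Q0 : 0 <= Q by apply: sumr_ge0 => i _; exact: sqr_ge0.
have D0 : 0 <= (d1 - d2) ^+ 2 by exact: sqr_ge0.
have hQ : Q = 0 by lra.
have hD : (d1 - d2) ^+ 2 = 0 by lra.
have ht : t1 = t2.
  apply/rowP => i.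
  have /psumr_eq0P := hQ.
  move=> /(_ (fun i _ => sqr_ge0 _)) /(_ i isT) /eqP.
  by rewrite sqrf_eq0 subr_eq0 => /eqP.
have hd : d1 = d2 by apply/eqP; rewrite -subr_eq0 -sqrf_eq0 hD.
move: e12 e21; rewrite /S2 /A2 -ht -/S1 -/A1 hd => e12 e21.
have hs : lam1 * (a1 + b1) = lam1 * (a2 + b2) by lra.
have hs' : a1 + b1 = a2 + b2 by apply: (mulfI (lt0r_neq0 hl1)).
have ha : a1 = a2 by move: hd; rewrite /d1 /d2; lra.
have hb : b1 = b2 by move: hd; rewrite /d1 /d2; lra.
by rewrite ha hb ht.
Qed.
End Main.

Theorem lemma1 (R : realType) (p : nat) (hp : (2 <= p)%N) (w : R)
  (z : 'rV[R]_(p.-1)) (lam1 lam2 : R) (hl2 : 0 <= lam2) (hl1 : 0 < lam1) :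
  exists! s : R * R * 'rV[R]_(p.-1),
    feasible s.1.1 s.1.2 s.2 /\
    forall (bp bm : R) (th : 'rV[R]_(p.-1)), feasible bp bm th ->
      objective lam1 lam2 w z s.1.1 s.1.2 s.2 <= objective lam1 lam2 w z bp bm th.
Proof.
have [[[a b] t] [fs ms]] := @existence R _ lam1 lam2 w z hl2 hl1.
exists (a, b, t); split; first by split.
move=> [[a' b'] t'] [f' m'].
exact: (@uniq_key R _ lam1 lam2 w z hl2 hl1 _ _ _ _ _ _ fs f' ms m').
Qed.
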